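(* Let $q \in C^1(\mathbb{R}^n,\mathbb{R})$ be a scalar function, and let $A$, $B$ and $D$ be linear differential operators with constant coefficients on functions $\mathbb{R}^n\to\mathbb{R}$ with $D = A + B$. Suppose there exist a non-zero real number $u$, a natural number $\lambda$ and a sufficiently smooth function $W:\mathbb{R}^n\to\mathbb{R}$ such that $$A^{\lambda+1} W(\mathbf{x}) = q(\mathbf{x}) \quad\text{(integration condition)},\qquad B^{\lambda+1} W(\mathbf{x}) = (-1)^\lambda (u-1)\, q(\mathbf{x}) \quad\text{(relaxed annihilator condition)}.$$ Define $$Q(\mathbf{x}) := \sum_{p=0}^{\lambda} \frac{(-1)^p}{u} A^{\lambda-p} B^p W(\mathbf{x}).$$ Then $D Q = q$.
   Context: Powers of operators denote repeated application, with $A^0$, $B^0$ the identity. *)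

(* Defs.v *)
From HB Require Import structures.
From mathcomp Require Import all_boot all_order all_algebra.
From mathcomp Require Import all_classical all_reals all_analysis.
Set Implicit Arguments. Unset Strict Implicit. Unset Printing Implicit Defensive.
Import Order.TTheory GRing.Theory Num.Theory.
Import numFieldNormedType.Exports.
Local Open Scope ring_scope.

Section Defs.
Variables (R : realType) (n : nat).

Definition basis_vec (i : 'I_n) : 'rV[R]_n := delta_mx 0 i.

(* partial derivative d/dx_i (total operator via derive; junk where not derivable) *)
Definition partial (i : 'I_n) (f : 'rV[R]_n -> R) : 'rV[R]_n -> R :=
  fun x => 'D_(basis_vec i) f x.

Definition dpartials (s : seq 'I_n) (f : 'rV[R]_n -> R) : 'rV[R]_n -> R :=
  foldr partial f s.

(* A linear differential operator with constant (real) coefficients: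
   a finite sum  sum_t c_t * d^{s_t}  of iterated partial derivatives. *)
Record diffop := Diffop { diffop_terms : seq (R * seq 'I_n) }.

Definition apply_op (P : diffop) (f : 'rV[R]_n -> R) : 'rV[R]_n -> R :=
  fun x => \sum_(t <- diffop_terms P) t.1 * dpartials t.2 f x.

Definition op_pow (P : diffop) (k : nat) (f : 'rV[R]_n -> R) : 'rV[R]_n -> R :=
  iter k (apply_op P) f.

Definition C1 (f : 'rV[R]_n -> R) : Prop :=
  continuous f /\
  forall i : 'I_n, (forall x, derivable f x (basis_vec i)) /\ continuous (partial i f).

Definition smooth (f : 'rV[R]_n -> R) : Prop :=
  forall s : seq 'I_n, continuous (dpartials s f) /\
    forall (i : 'I_n) x, derivable (dpartials s f) x (basis_vec i).

End Defs.

(* Main.v *)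
Require Import Defs.
From HB Require Import structures.
From mathcomp Require Import all_boot all_order all_algebra.
From mathcomp Require Import all_classical all_reals all_analysis.
From mathcomp Require Import ring lra.
Import Order.TTheory GRing.Theory Num.Theory.
Import numFieldNormedType.Exports.
Local Open Scope ring_scope.
Local Open Scope classical_set_scope.

Section S.
Variables (R : realType) (V : normedModType R).

Lemma line_derive (f : V -> R) (v y : V) (s : R) :
  derivable f (s *: v + y) v ->
  is_derive s 1 (fun t : R => f (t *: v + y)) ('D_v f (s *: v + y)).
Proof.
move=> df.
have E : (fun h : R => h^-1 *: (((fun t : R => f (t *: v + y)) \o shift s) (h *: 1)
            - f (s *: v + y))) =
         (fun h : R => h^-1 *: ((f \o shift (s *: v + y)) (h *: v) - f (s *: v + y))).
  apply: funext => h /=; congr (_ *: (f _ - _)).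
  by rewrite /shift /= [h%:A]mulr1 scalerDl addrA.
split; first by rewrite /derivable E.
by rewrite /derive E.
Qed.

Lemma mvt0 (f df : R -> R) (h : R) : 0 < h ->
  (forall t : R, is_derive t (1 : R) f (df t)) ->
  exists2 c, c \in `[0, h]%R & f h - f 0 = df c * h.
Proof.
move=> h0 fd.
have cont : {within `[0, h], continuous f}.
  apply: continuous_subspaceT => t.
  apply: differentiable_continuous; apply/derivable1_diffP.
  by have [] := fd t.
have [c cI E] := @MVT_segment R f df 0 h (ltW h0) (fun t _ => fd t) cont.
by exists c => //; move: E; rewrite subr0.
Qed.

Lemma mixed_step (g : V -> R) (a b x : V) (h : R) : 0 < h ->
  (forall y, derivable g y a) -> (forall y, derivable ('D_a g) y b) ->
  exists s, exists t, [/\ s \in `[0, h]%R, t \in `[0, h]%R &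
    g (h *: a + (x + h *: b)) - g (h *: a + x) - (g (x + h *: b) - g x)
      = h * h * 'D_b ('D_a g) (t *: b + (s *: a + x))].
Proof.
move=> h0 da dab.
pose phi := fun s : R => g (s *: a + (x + h *: b)) - g (s *: a + x).
have dphi : forall t : R, is_derive t (1:R) phi
   ('D_a g (t *: a + (x + h *: b)) - 'D_a g (t *: a + x)).
  move=> t; rewrite /phi.
  have H1 := @line_derive g a (x + h *: b) t (da _).
  have H2 := @line_derive g a x t (da _).
  exact: (@is_deriveB _ _ _ (fun s : R => g (s *: a + (x + h *: b)))
             (fun s : R => g (s *: a + x)) t 1 _ _ H1 H2).
have [s sI Es] := @mvt0 _ _ h h0 dphi.
pose psi := fun t : R => 'D_a g (t *: b + (s *: a + x)).
have dpsi : forall t : R, is_derive t (1:R) psi ('D_b ('D_a g) (t *: b + (s *: a + x))).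
  by move=> t; apply: line_derive.
have [t tI Et] := @mvt0 _ _ h h0 dpsi.
exists s, t; split => //.
move: Es Et; rewrite /phi /psi !scale0r !add0r => ->.
have -> : h *: b + (s *: a + x) = s *: a + (x + h *: b).
  by rewrite addrCA [h *: b + x]addrC.
move=> ->; ring.
Qed.

Lemma norm_comb (a b : V) (s t h : R) : s \in `[0, h]%R -> t \in `[0, h]%R ->
  `|t *: b + s *: a| <= h * (`|a| + `|b|).
Proof.
rewrite !in_itv /= => /andP[s0 sh] /andP[t0 th].
apply: (le_trans (ler_normD _ _)).
rewrite !normrZ (ger0_norm s0) (ger0_norm t0) mulrDr addrC.
by apply: lerD; apply: ler_wpM2r.
Qed.

Lemma schwarz (g : V -> R) (a b x : V) :
 (forall y, derivable g y a) -> (forall y, derivable g y b) ->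
 (forall y, derivable ('D_a g) y b) -> (forall y, derivable ('D_b g) y a) ->
 continuous ('D_b ('D_a g)) -> continuous ('D_a ('D_b g)) ->
 'D_b ('D_a g) x = 'D_a ('D_b g) x.
Proof.
move=> da db dab dba c1 c2.
apply/eqP; rewrite -subr_eq0; apply/negPn/negP => neq.
pose e := `|'D_b ('D_a g) x - 'D_a ('D_b g) x| / 2.
have e0 : 0 < e by rewrite divr_gt0 // normr_gt0.
have N1 := @cvgr_dist_lt _ _ _ _ _ _ _ (c1 x) _ e0.
have N2 := @cvgr_dist_lt _ _ _ _ _ _ _ (c2 x) _ e0.
have [r r0 Hr] : nbhs_ball x (fun y => `|'D_b ('D_a g) x - 'D_b ('D_a g) y| < e
     /\ `|'D_a ('D_b g) x - 'D_a ('D_b g) y| < e).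
  by apply/nbhs_ballP; apply: filterI; [apply: N1 | apply: N2].
pose h := r / (`|a| + `|b| + 1).
have nab : 0 < `|a| + `|b| + 1 by rewrite ltr_wpDl // addr_ge0.
have h0 : 0 < h by rewrite divr_gt0.
have hr : h * (`|a| + `|b|) < r.
  rewrite /h mulrAC ltr_pdivrMr // ltr_pM2l //.
  by rewrite ltrDl.
have [s [t [sI tI E1]]] := @mixed_step g a b x h h0 da dab.
have [s' [t' [sI' tI' E2]]] := @mixed_step g b a x h h0 db dba.
have Eq : 'D_b ('D_a g) (t *: b + (s *: a + x)) = 'D_a ('D_b g) (t' *: a + (s' *: b + x)).
  apply: (@mulfI _ (h * h)); first by rewrite mulf_neq0 // gt_eqF.
  rewrite -E1 -E2.
  have -> : h *: a + (x + h *: b) = h *: b + (x + h *: a).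
    by rewrite !addrA [h *: a + x]addrC [h *: b + x]addrC -!addrA [h *: a + h *: b]addrC.
  rewrite [h *: a + x]addrC [h *: b + x]addrC; ring.
have B1 : ball x r (t *: b + (s *: a + x)).
  rewrite -ball_normE /ball_ /= addrA opprD addrCA subrr addr0 normrN.
  exact: le_lt_trans (@norm_comb a b s t h sI tI) hr.
have B2 : ball x r (t' *: a + (s' *: b + x)).
  rewrite -ball_normE /ball_ /= addrA opprD addrCA subrr addr0 normrN.
  by apply: le_lt_trans (@norm_comb b a s' t' h sI' tI') _; rewrite addrC.
have [H1 _] := Hr _ B1.
have [_ H2] := Hr _ B2.
have : `|'D_b ('D_a g) x - 'D_a ('D_b g) x| < e + e.
  rewrite -(subrK ('D_b ('D_a g) (t *: b + (s *: a + x))) ('D_b ('D_a g) x)).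
  rewrite -addrA.
  apply: (le_lt_trans (ler_normD _ _)).
  apply: ltrD; first exact: H1.
  by rewrite Eq -normrN opprB.
by rewrite /e -splitr ltxx.
Qed.
End S.

Section Main.
Variables (R : realType) (n : nat).
Local Notation V := 'rV[R]_n.
Implicit Types (f g : V -> R).

Lemma partialD (i : 'I_n) f g :
  (forall x, derivable f x (@basis_vec R n i)) -> (forall x, derivable g x (@basis_vec R n i)) ->
  partial i (fun x => f x + g x) = (fun x => partial i f x + partial i g x).
Proof.
move=> df dg; apply: funext => x; rewrite /partial.
exact: (deriveD (df x) (dg x)).
Qed.

Lemma partialZ (i : 'I_n) (c : R) f :
  (forall x, derivable f x (@basis_vec R n i)) ->
  partial i (fun x => c * f x) = (fun x => c * partial i f x).
Proof.
move=> df; apply: funext => x; rewrite /partial.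
exact: (deriveZ c (df x)).
Qed.

Lemma partial0 (i : 'I_n) : partial i (fun _ : V => (0 : R)) = (fun _ => 0).
Proof. apply: funext => x; rewrite /partial; exact: (derive_cst (0 : R)). Qed.

Lemma dpartials0 s : dpartials s (fun _ : V => (0 : R)) = (fun _ => 0).
Proof. by elim: s => [|i s IH] //=; rewrite IH partial0. Qed.

Lemma smooth0 : smooth (fun _ : V => (0 : R)).
Proof.
move=> s; rewrite dpartials0; split; first exact: cst_continuous.
by move=> i x; exact: (derivable_cst (0 : R)).
Qed.

Lemma dpartialsD f g s : smooth f -> smooth g ->
  dpartials s (fun x => f x + g x) = (fun x => dpartials s f x + dpartials s g x).
Proof.
move=> sf sg; elim: s => [|i s IH] //=.
rewrite IH partialD //; [exact: (sf s).2 | exact: (sg s).2].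
Qed.

Lemma smoothD f g : smooth f -> smooth g -> smooth (fun x => f x + g x).
Proof.
move=> sf sg s; rewrite dpartialsD //; split.
  by move=> x; apply: continuousD; [exact: (sf s).1 | exact: (sg s).1].
move=> i x; exact: (derivableD ((sf s).2 i x) ((sg s).2 i x)).
Qed.

Lemma dpartialsZ (c : R) f s : smooth f ->
  dpartials s (fun x => c * f x) = (fun x => c * dpartials s f x).
Proof.
move=> sf; elim: s => [|i s IH] //=.
rewrite IH partialZ //; exact: (sf s).2.
Qed.

Lemma smoothZ (c : R) f : smooth f -> smooth (fun x => c * f x).
Proof.
move=> sf s; rewrite dpartialsZ //; split.
  by move=> x; apply: (@continuousM _ _ (cst c)); [exact: cst_continuous | exact: (sf s).1].
move=> i x; exact (@derivableZ _ _ _ _ c _ _ ((sf s).2 i x)).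
Qed.

Lemma smooth_sum (I : Type) (l : seq I) (c : I -> R) (F : I -> V -> R) :
  (forall i, smooth (F i)) ->
  smooth (fun x => \sum_(i <- l) c i * F i x) /\
  forall s, dpartials s (fun x => \sum_(i <- l) c i * F i x) =
            (fun x => \sum_(i <- l) c i * dpartials s (F i) x).
Proof.
move=> sF; elim: l => [|j l [IHs IHd]].
  have -> : (fun x : V => \sum_(i <- [::]) c i * F i x) = (fun _ => 0).
    by apply: funext => x; rewrite big_nil.
  split; first exact: smooth0.
  by move=> s; rewrite dpartials0; apply: funext => x; rewrite big_nil.
have -> : (fun x : V => \sum_(i <- j :: l) c i * F i x) =
          (fun x => (fun y => c j * F j y) x + (fun x => \sum_(i <- l) c i * F i x) x).
  by apply: funext => x; rewrite big_cons.
split; first by apply: smoothD => //; apply: smoothZ.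
move=> s; rewrite dpartialsD //; last exact: smoothZ.
rewrite dpartialsZ // IHd; apply: funext => x; by rewrite big_cons.
Qed.

Lemma dpartials_cat s t f : dpartials s (dpartials t f) = dpartials (s ++ t) f.
Proof. by rewrite /dpartials foldr_cat. Qed.

Lemma smooth_dpartials t {f} : smooth f -> smooth (dpartials t f).
Proof. by move=> sf s; rewrite dpartials_cat; exact: sf. Qed.

Lemma smooth_partial i f : smooth f -> smooth (partial i f).
Proof. by move=> sf; exact (smooth_dpartials [:: i] sf). Qed.

Lemma apply_opE (P : diffop R n) f :
  apply_op P f = (fun x => \sum_(t <- diffop_terms P) t.1 * dpartials t.2 f x).
Proof. by []. Qed.

Lemma smooth_apply (P : diffop R n) f : smooth f -> smooth (apply_op P f).
Proof.
move=> sf; rewrite apply_opE.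
by have [] := @smooth_sum _ (diffop_terms P) (fun t => t.1) (fun t => dpartials t.2 f)
  (fun t => smooth_dpartials t.2 sf).
Qed.

Lemma smooth_pow (P : diffop R n) k f : smooth f -> smooth (op_pow P k f).
Proof. by move=> sf; elim: k => [|k IH] //=; exact: smooth_apply. Qed.

Lemma partial_comm i j f : smooth f -> partial i (partial j f) = partial j (partial i f).
Proof.
move=> sf; apply: funext => x; rewrite /partial.
apply: schwarz.
- by move=> y; exact: ((sf [::]).2 j y).
- by move=> y; exact: ((sf [::]).2 i y).
- by move=> y; exact: ((sf [:: j]).2 i y).
- by move=> y; exact: ((sf [:: i]).2 j y).
- exact: (sf [:: i; j]).1.
- exact: (sf [:: j; i]).1.
Qed.

Lemma dpartials_partial s i f : smooth f ->
  dpartials s (partial i f) = partial i (dpartials s f).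
Proof.
move=> sf; elim: s => [|j s IH] //=.
by rewrite IH partial_comm //; exact: smooth_dpartials.
Qed.

Lemma dpartials_comm s t f : smooth f ->
  dpartials s (dpartials t f) = dpartials t (dpartials s f).
Proof.
move=> sf; elim: t => [|i t IH] //=.
by rewrite dpartials_partial ?IH //; exact: smooth_dpartials.
Qed.

Lemma apply_sum (P : diffop R n) (I : Type) (l : seq I) (c : I -> R) (F : I -> V -> R) :
  (forall i, smooth (F i)) ->
  apply_op P (fun x => \sum_(i <- l) c i * F i x) =
  (fun x => \sum_(i <- l) c i * apply_op P (F i) x).
Proof.
move=> sF; apply: funext => x; rewrite /apply_op.
have [_ Hd] := @smooth_sum I l c F sF.
under eq_bigr => t _ do rewrite Hd big_distrr.
rewrite exchange_big /=; apply: eq_bigr => i _.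
by rewrite big_distrr; apply: eq_bigr => t _; rewrite mulrCA.
Qed.

Lemma dpartials_apply s (P : diffop R n) f : smooth f ->
  dpartials s (apply_op P f) = apply_op P (dpartials s f).
Proof.
move=> sf; rewrite !apply_opE.
have [_ ->] := @smooth_sum _ (diffop_terms P) (fun t => t.1) (fun t => dpartials t.2 f)
  (fun t => smooth_dpartials t.2 sf).
by apply: funext => x; apply: eq_bigr => t _; rewrite dpartials_comm.
Qed.

Lemma apply_comm (P Q : diffop R n) f : smooth f ->
  apply_op P (apply_op Q f) = apply_op Q (apply_op P f).
Proof.
move=> sf; rewrite [apply_op P (apply_op Q f)]apply_opE.
rewrite [apply_op Q (apply_op P f)]apply_opE.
apply: funext => x.
under eq_bigr => t _ do rewrite dpartials_apply // apply_opE big_distrr.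
under [RHS]eq_bigr => t _ do rewrite dpartials_apply // apply_opE big_distrr.
rewrite exchange_big /=; apply: eq_bigr => t _; apply: eq_bigr => t' _.
by rewrite mulrCA dpartials_comm.
Qed.

Lemma pow_comm (P Q : diffop R n) k f : smooth f ->
  apply_op Q (op_pow P k f) = op_pow P k (apply_op Q f).
Proof.
move=> sf; elim: k => [|k IH] //=.
rewrite /op_pow /= -/(op_pow P k f) -/(op_pow P k (apply_op Q f)) -IH.
by rewrite apply_comm //; exact: smooth_pow.
Qed.

End Main.

Local Close Scope classical_set_scope.

Theorem theorem4p2 (R : realType) (n : nat) (q : 'rV[R]_n -> R)
  (A B D : diffop R n) (u : R) (lambda : nat) (W : 'rV[R]_n -> R) :
  C1 q ->
  (forall f : 'rV[R]_n -> R, apply_op D f = (fun x => apply_op A f x + apply_op B f x)) ->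
  u != 0 ->
  smooth W ->
  op_pow A lambda.+1 W = q ->
  op_pow B lambda.+1 W = (fun x => (-1) ^+ lambda * (u - 1) * q x) ->
  let Q := fun x => \sum_(p < lambda.+1)
              ((-1) ^+ p / u) * op_pow A (lambda - p) (op_pow B p W) x in
  apply_op D Q = q.
Proof.
move=> _ HD u0 sW HA HB Q.
rewrite HD; apply: funext => x.
have sF : forall p : 'I_lambda.+1, smooth (op_pow A (lambda - p) (op_pow B p W)).
  by move=> p; apply: smooth_pow; apply: smooth_pow.
have EA := @apply_sum R n A _ (index_enum 'I_lambda.+1) (fun p => (-1) ^+ p / u) _ sF.
have EB := @apply_sum R n B _ (index_enum 'I_lambda.+1) (fun p => (-1) ^+ p / u) _ sF.
rewrite /Q EA EB.
pose T k := (-1) ^+ k * op_pow A (lambda.+1 - k) (op_pow B k W) x.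
have E : forall p : 'I_lambda.+1,
    (-1) ^+ p / u * apply_op A (op_pow A (lambda - p) (op_pow B p W)) x +
    (-1) ^+ p / u * apply_op B (op_pow A (lambda - p) (op_pow B p W)) x
    = u^-1 * (T p - T p.+1).
  move=> p; rewrite (@pow_comm R n A B); last exact: smooth_pow.
  rewrite /T subSS.
  have -> : (lambda.+1 - p = (lambda - p).+1)%N by rewrite subSn // -ltnS.
  rewrite exprS.
  change (op_pow A (lambda - p).+1 (op_pow B p W)) with
    (apply_op A (op_pow A (lambda - p) (op_pow B p W))).
  change (op_pow B p.+1 W) with (apply_op B (op_pow B p W)).
  ring.
rewrite -big_split /= (eq_bigr _ (fun p _ => E p)) -mulr_sumr.
have tel : \sum_(p < lambda.+1) (T p - T p.+1) = T 0%N - T lambda.+1.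
  rewrite -(big_mkord xpredT (fun p => T p - T p.+1)).
  rewrite (@telescope_sumr_eq _ 0 lambda.+1 (fun k => - T k)) //; first by rewrite opprK addrC.
  by move=> k _; rewrite opprK addrC.
rewrite tel /T subn0 subnn expr0 mul1r.
have -> : op_pow A lambda.+1 (op_pow B 0 W) = q by exact: HA.
have -> : op_pow A 0 (op_pow B lambda.+1 W) = op_pow B lambda.+1 W by [].
rewrite HB exprS.
have s2 : (-1) ^+ lambda * (-1) ^+ lambda = 1 :> R.
  by rewrite -exprMn mulrNN mulr1 expr1n.
have -> : -1 * (-1) ^+ lambda * ((-1) ^+ lambda * (u - 1) * q x)
          = - ((-1) ^+ lambda * (-1) ^+ lambda) * (u - 1) * q x by ring.
rewrite s2; field; exact: u0.
Qed.
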